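(* Let $q$ be a prime power, $e\in\{0,1,2\}$, $r$ an integer ($r$ odd if $e\in\{0,2\}$, $r$ even if $e=1$), $N=q^{\frac{r+e+1}{2}}$, and let $\{\Sigma_1,\dots,\Sigma_{N+1}\}$ be a spread of a non-degenerate quadric $\mathcal Q_{r+2,e}$ of ${\rm PG}(r+2,q)$ with associated polarity $\perp$. Fix a point $P\in\Sigma_{N+1}$ and an $r$-space $H\subset P^\perp$ with $P\notin H$. Put $\mathcal Q_{r,e}=H\cap\mathcal Q_{r+2,e}$ and $\Pi_i=\langle P,\Sigma_i\rangle\cap H$ for $i=1,\dots,N$. Then: (i) if $e\in\{1,2\}$, then for $i\neq j$ the subspaces $\Pi_i$ and $\Pi_j$ meet in at most one point; (ii) if $e=0$ and $r\equiv 1\pmod 4$, then for $i\neq j$ the subspaces $\Pi_i$ and $\Pi_j$ have exactly one point in common; (iii) each point of $\mathcal Q_{r,e}\setminus\Sigma_{N+1}$ lies in exactly $q$ of the subspaces $\Pi_1,\dots,\Pi_N$.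
   Context: Notation: $\mathcal Q_{m,e}$ denotes a non-degenerate quadric of ${\rm PG}(m,q)$ which is hyperbolic $\mathcal Q^+(m,q)$ if $e=0$ ($m$ odd), parabolic $\mathcal Q(m,q)$ if $e=1$ ($m$ even), elliptic $\mathcal Q^-(m,q)$ if $e=2$ ($m$ odd). The polarity $\perp$ associated with the quadric is the one defined by the polar form of the quadratic form; for a point $P$ of the quadric, $P^\perp$ is the tangent hyperplane at $P$. A generator of $\mathcal Q_{m,e}$ is a projective subspace of maximal dimension contained in it; generators are $\frac{m-e-1}{2}$-dimensional. A spread of $\mathcal Q_{m,e}$ is a set of $q^{\frac{m+e-1}{2}}+1$ pairwise disjoint generators. An $s$-space means an $s$-dimensional projective subspace. *)

(* Defs.v *)
From mathcomp Require Import all_boot all_algebra.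
Set Implicit Arguments. Unset Strict Implicit. Unset Printing Implicit Defensive.
Import GRing.Theory.
Local Open Scope ring_scope.

(* Projective space PG(n-1,q) = subspaces of 'rV[F]_n, F a finite field of order q.
   A projective s-space is a row space (square matrix 'M_n) of rank s+1;
   a point is the row space of a nonzero row vector. *)

(* Quadratic form Q(x) = x A x^T (every quadratic form has this shape). *)
Definition qform (F : fieldType) (n : nat) (A : 'M[F]_n) (x : 'rV[F]_n) : F :=
  (x *m A *m x^T) 0 0.

(* Polar (symmetric bilinear) form of Q; the polarity perp is x |-> {y | polar x y = 0}. *)
Definition polar (F : fieldType) (n : nat) (A : 'M[F]_n) (x y : 'rV[F]_n) : F :=
  qform A (x + y) - qform A x - qform A y.

Definition nondeg_qform (F : fieldType) (n : nat) (A : 'M[F]_n) : Prop :=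
  forall x : 'rV[F]_n, x != 0 -> qform A x = 0 -> exists y, polar A x y != 0.

Definition tot_singular (F : fieldType) (n m : nat) (A : 'M[F]_n) (U : 'M[F]_(m, n)) : Prop :=
  forall x : 'rV[F]_n, (x <= U)%MS -> qform A x = 0.

(* Q_{n-1,e}: non-degenerate quadric of PG(n-1,q) whose generators
   (maximal subspaces contained in it) have vector dimension (n-e)/2,
   i.e. projective dimension (m-e-1)/2 with m = n-1. *)
Definition quadric_of_type (F : fieldType) (n : nat) (A : 'M[F]_n) (e : nat) : Prop :=
  [/\ nondeg_qform A,
      exists U : 'M[F]_n, tot_singular A U /\ \rank U = ((n - e) %/ 2)%N
    & forall U : 'M[F]_n, tot_singular A U -> (\rank U <= (n - e) %/ 2)%N].

Definition generator (F : fieldType) (n : nat) (A : 'M[F]_n) (e : nat) (U : 'M[F]_n) : Prop :=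
  tot_singular A U /\ \rank U = ((n - e) %/ 2)%N.

Definition is_spread (F : fieldType) (n : nat) (A : 'M[F]_n) (e k : nat)
  (Sigma : 'I_k -> 'M[F]_n) : Prop :=
  (forall i, generator A e (Sigma i)) /\
  (forall i j, i != j -> (Sigma i :&: Sigma j == (0 : 'M[F]_n))%MS).

Definition spreadN (F : finFieldType) (r e : nat) : nat :=
  (#|F| ^ ((r + e + 1) %/ 2))%N.

(* Main.v *)
Require Import Defs.
From mathcomp Require Import all_boot all_algebra.
From mathcomp Require Import zify ring.
Set Implicit Arguments. Unset Strict Implicit. Unset Printing Implicit Defensive.
Import GRing.Theory.
Local Open Scope ring_scope.

Section Lin.
Variable F : fieldType.
Variable n : nat.
Variable A : 'M[F]_n.
Implicit Types x y z : 'rV[F]_n.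

Definition bf x y := (x *m A *m y^T) 0 0.

Lemma bfDl x y z : bf (x + y) z = bf x z + bf y z.
Proof. by rewrite /bf !mulmxDl mxE. Qed.
Lemma bfDr x y z : bf z (x + y) = bf z x + bf z y.
Proof. by rewrite /bf linearD /= mulmxDr mxE. Qed.
Lemma bfZl a x z : bf (a *: x) z = a * bf x z.
Proof. by rewrite /bf -!scalemxAl mxE. Qed.
Lemma bfZr a x z : bf z (a *: x) = a * bf z x.
Proof. by rewrite /bf linearZ /= -scalemxAr mxE. Qed.

Lemma qformE x : qform A x = bf x x. Proof. by []. Qed.
Lemma polarE x y : polar A x y = bf x y + bf y x.
Proof. rewrite /polar !qformE bfDl !bfDr; ring. Qed.
Lemma polarC x y : polar A x y = polar A y x.
Proof. by rewrite !polarE addrC. Qed.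
Lemma polarDl x y z : polar A (x + y) z = polar A x z + polar A y z.
Proof. rewrite !polarE bfDl bfDr; ring. Qed.
Lemma polarDr x y z : polar A z (x + y) = polar A z x + polar A z y.
Proof. by rewrite polarC polarDl !(polarC z). Qed.
Lemma polarZl a x z : polar A (a *: x) z = a * polar A x z.
Proof. rewrite !polarE bfZl bfZr; ring. Qed.
Lemma polarZr a x z : polar A z (a *: x) = a * polar A z x.
Proof. by rewrite polarC polarZl polarC. Qed.
Lemma polar0l z : polar A 0 z = 0.
Proof. by rewrite -(scale0r 0) polarZl mul0r. Qed.
Lemma polar0r z : polar A z 0 = 0.
Proof. by rewrite polarC polar0l. Qed.
Lemma polarNl x z : polar A (- x) z = - polar A x z.
Proof. by rewrite -scaleN1r polarZl mulN1r. Qed.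
Lemma polarNr x z : polar A z (- x) = - polar A z x.
Proof. by rewrite polarC polarNl polarC. Qed.
Lemma polarxx x : polar A x x = 2 * qform A x.
Proof. rewrite polarE qformE; ring. Qed.
Lemma qformD x y : qform A (x + y) = qform A x + qform A y + polar A x y.
Proof. rewrite /polar; ring. Qed.
Lemma qformZ a x : qform A (a *: x) = a ^+ 2 * qform A x.
Proof. rewrite !qformE bfZl bfZr; ring. Qed.
Lemma qform0 : qform A 0 = 0.
Proof. by rewrite /qform !mul0mx mxE. Qed.

End Lin.

Section MxHelp.
Variable F : fieldType.
Variable n : nat.
Implicit Types v x s : 'rV[F]_n.

Lemma rank_addv m v (Z : 'M[F]_(m, n)) :
  ~~ (v <= Z)%MS -> \rank (v + Z)%MS = (\rank Z).+1.
Proof.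
move=> hv.
have lt : (Z < v + Z)%MS.
  by rewrite ltmxE addsmxSr addsmx_sub submx_refl andbT.
have h1 := rank_ltmx lt.
have := mxrank_adds_leqif v Z; case=> h2 _.
have h3 := rank_leq_row v.
lia.
Qed.

Lemma sub_addv m v (U : 'M[F]_(m, n)) x :
  (x <= v + U)%MS -> exists c s, x = c *: v + s /\ (s <= U)%MS.
Proof.
case/sub_addsmxP=> [[u1 u2]] /= ->.
exists (u1 0 0), (u2 *m U); split; last exact: submxMl.
by rewrite {1}(mx11_scalar u1) mul_scalar_mx.
Qed.

Lemma addv_sub m v (U : 'M[F]_(m, n)) c s :
  (s <= U)%MS -> ((c *: v + s)%R <= v + U)%MS.
Proof. by move=> hs; exact: (addmx_sub_adds (scalemx_sub c (submx_refl v)) hs). Qed.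

Lemma disj0 m1 m2 (S1 : 'M[F]_(m1, n)) (S2 : 'M[F]_(m2, n)) x :
  (S1 :&: S2 == (0 : 'M[F]_n))%MS -> (x <= S1)%MS -> (x <= S2)%MS -> x = 0.
Proof.
move=> /andP[h _] h1 h2; apply/eqP; rewrite -submx0.
by apply: submx_trans h; rewrite sub_capmx h1.
Qed.

Lemma rank_cap_le1 v (S1 S2 H : 'M[F]_n) :
  ~~ (v <= H)%MS -> (S1 :&: S2 == (0 : 'M[F]_n))%MS ->
  (\rank (((v + S1) :&: H) :&: ((v + S2) :&: H))%MS <= 1)%N.
Proof.
move=> vH d12.
set V := (((v + S1) :&: H) :&: ((v + S2) :&: H))%MS.
have VH : (V <= H)%MS by apply: submx_trans (capmxSl _ _) (capmxSr _ _).
have vV : ~~ (v <= V)%MS by apply: contra vH => h; apply: submx_trans h VH.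
set W := (v + V)%MS.
have rW : \rank W = (\rank V).+1 := rank_addv vV.
have key (S : 'M[F]_n) : (V <= (v + S) :&: H)%MS ->
    (\rank V <= \rank (W :&: S))%N.
  move=> hV.
  have WS : (W + S <= v + S)%MS.
    rewrite !addsmx_sub addsmxSl addsmxSr andbT /=.
    by apply: submx_trans hV (capmxSl _ _).
  have := mxrank_sum_cap W S.
  have := mxrankS WS.
  have := mxrank_adds_leqif v S; case=> h2 _.
  have h3 := rank_leq_row v.
  lia.
have k1 := key S1 (capmxSl _ _).
have k2 := key S2 (capmxSr _ _).
have := mxrank_sum_cap (W :&: S1)%MS (W :&: S2)%MS.
have : (\rank (W :&: S1 + W :&: S2)%MS <= \rank W)%N.
  by apply: mxrankS; rewrite addsmx_sub !capmxSl.
have : \rank (W :&: S1 :&: (W :&: S2))%MS = 0%N.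
  apply/eqP; rewrite mxrank_eq0 -submx0.
  case/andP: d12 => d _; apply: submx_trans d.
  by rewrite sub_capmx; apply/andP; split; apply: submx_trans (capmxSr _ _);
     [apply: capmxSl | apply: capmxSr].
lia.
Qed.

End MxHelp.

Lemma sum_card (T : finType) (P : pred T) :
  (\sum_(t : T) (P t : nat) = #|[set t | P t]|)%N.
Proof.
rewrite -sum1dep_card [RHS]big_mkcond /=; apply: eq_bigr => t _; by case: (P t).
Qed.

Section Count.
Variable F : finFieldType.
Local Notation q := #|F|.

Lemma card_sub n m (U : 'M[F]_(m, n)) :
  #|[set x : 'rV[F]_n | (x <= U)%MS]| = (q ^ \rank U)%N.
Proof.
set R := row_base U.
have -> : [set x : 'rV[F]_n | (x <= U)%MS] = [set w *m R | w : 'rV[F]_(\rank U)].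
  apply/setP => x; rewrite inE; apply/idP/imsetP.
    move=> hx; exists (x *m pinvmx R) => //.
    by rewrite mulmxKpV // /R eq_row_base.
  by case=> w _ ->; rewrite -(eq_row_base U) submxMl.
rewrite card_imset; last exact: row_free_inj (row_base_free U).
by rewrite card_mx mul1n.
Qed.

Lemma card_sub0 n m (U : 'M[F]_(m, n)) :
  #|[set x : 'rV[F]_n | (x != 0) && (x <= U)%MS]| = (q ^ \rank U - 1)%N.
Proof.
have -> : [set x : 'rV[F]_n | (x != 0) && (x <= U)%MS] =
    [set x : 'rV[F]_n | (x <= U)%MS] :\ 0.
  by apply/setP => x; rewrite !inE.
by rewrite -card_sub (cardsD1 0 [set x : 'rV[F]_n | (x <= U)%MS]) inE sub0mx add1n subn1.
Qed.

Lemma q_gt1 : (1 < q)%N.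
Proof. by rewrite (cardD1 (0 : F)) (cardD1 (1 : F)) !inE oner_neq0. Qed.

End Count.

Lemma count_hyp (F : finFieldType) (V : finType) (f : V -> F) :
  #|[set t : (F * F) * V | t.1.1 * t.1.2 + f t.2 == 0]| =
  (#|F| * #|[set w | (f w == 0)%R]| + (#|F| - 1) * #|V|)%N.
Proof.
rewrite -[LHS]sum_card.
rewrite -(pair_bigA _ (fun ab w => ((ab.1 * ab.2 + f w == 0)%R : nat))) /=.
rewrite -(pair_bigA _ (fun a b => (\sum_w ((a * b + f w == 0)%R : nat))%N)) /=.
rewrite (bigD1 0) //=.
congr (_ + _)%N.
  under eq_bigr => b _ do under eq_bigr => w _ do rewrite mul0r add0r.
  by rewrite sum_nat_const sum_card.
rewrite (eq_bigr (fun _ => #|V|)); last first.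
  move=> a a0; rewrite exchange_big /=.
  rewrite -[RHS]sum1_card; apply: eq_bigr => w _.
  rewrite sum_card (_ : [set b | _] = [set - f w / a]) ?cards1 //.
  apply/setP => b.
  rewrite !inE addr_eq0; apply/eqP/eqP => h.
    by rewrite -h; field.
  by rewrite h; field.
by rewrite sum_nat_const cardC1 subn1.
Qed.

Lemma polarM (F : fieldType) m (A : 'M[F]_m) x z :
  polar A x z = (x *m (A + A^T) *m z^T) 0 0.
Proof.
rewrite polarE /bf.
have -> : (z *m A *m x^T) 0 0 = ((z *m A *m x^T)^T) 0 0 by rewrite [RHS]mxE.
by rewrite !trmx_mul trmxK mulmxA mulmxDr mulmxDl [RHS]mxE.
Qed.

Lemma mx11_eq0 (F : fieldType) (a : 'M[F]_1) : (a == 0) = (a 0 0 == 0).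
Proof.
apply/eqP/eqP => [->|h]; first by rewrite mxE.
by apply/matrixP => i j; rewrite !ord1 h mxE.
Qed.

Definition Zc (F : finFieldType) m (A : 'M[F]_m) :=
  #|[set x : 'rV[F]_m | qform A x == 0]|.

Lemma tot_sing_sub (F : fieldType) m k (A : 'M[F]_m) (U : 'M[F]_(k, m)) x y :
  tot_singular A U -> (x <= U)%MS -> (y <= U)%MS -> polar A x y = 0.
Proof.
move=> hU hx hy; rewrite /polar !hU ?subr0 //.
by apply: addmx_sub.
Qed.

Lemma zid2 (V : zmodType) (a b z : V) : a + b + (z - a - b) = z.
Proof. rewrite addrC -!addrA. rewrite (addrA (-b)) (addrC (-b)) -!addrA addNr addr0 addNr addr0 //. Qed.

Lemma zid3 (V : zmodType) (a b z : V) : a + b + z - a - b = z.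
Proof. by rewrite -!addrA (addrC z) -!addrA (addrCA b) !addNKr. Qed.

Section Split.
Variable F : finFieldType.
Local Notation q := #|F|.
Variable m : nat.
Variable A : 'M[F]_m.
Variable p : 'rV[F]_m.
Hypothesis p0 : p != 0.
Hypothesis Qp : qform A p = 0.
Hypothesis ndA : nondeg_qform A.

Lemma hyp_split : exists m' (A' : 'M[F]_m'),
  [/\ m = m'.+2, nondeg_qform A',
      Zc A = (q * Zc A' + (q - 1) * q ^ m')%N,
      (forall U' : 'M[F]_m', tot_singular A' U' ->
         exists U : 'M[F]_m, tot_singular A U /\ \rank U = (\rank U').+1)
    & (forall U : 'M[F]_m, tot_singular A U -> (p <= U)%MS ->
         exists U' : 'M[F]_m', tot_singular A' U' /\ (\rank U <= (\rank U').+1)%N)].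
Proof.
have [y hy] := ndA p0 Qp.
set y1 := (polar A p y)^-1 *: y.
have py1 : polar A p y1 = 1 by rewrite polarZr mulVf.
clearbody y1.
set p' := y1 + (- qform A y1) *: p.
have hpp : polar A p p = 0 by rewrite polarxx Qp mulr0.
have hpp' : polar A p p' = 1.
  by rewrite /p' polarDr py1 polarZr hpp mulr0 addr0.
have hp'p : polar A p' p = 1 by rewrite polarC.
have Qp' : qform A p' = 0.
  rewrite /p' qformD qformZ Qp mulr0 addr0 polarZr polarC py1; ring.
have hp'p' : polar A p' p' = 0 by rewrite polarxx Qp' mulr0.
clearbody p'.
set B := A + A^T.
set C := row_mx (B *m p^T) (B *m p'^T).
set W := kermx C.
have inW x : (x <= W)%MS = (polar A x p == 0) && (polar A x p' == 0).
  rewrite /W (sameP sub_kermxP eqP) mul_mx_row row_mx_eq0 !mx11_eq0 !mulmxA -!polarM //.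
clearbody W; clear C B.
pose M := row_base W.
have MW : (M :=: W)%MS := eq_row_base W.
have Mfree : row_free M := row_base_free W.
clearbody M; move: M MW Mfree; move: (\rank W) => m' M MW Mfree.
have inM x : (x <= M)%MS = (polar A x p == 0) && (polar A x p' == 0) by rewrite MW inW.
clear MW inW W.
have hMp w : polar A (w *m M) p = 0.
  by have := submxMl w M; rewrite inM => /andP[/eqP].
have hMp' w : polar A (w *m M) p' = 0.
  by have := submxMl w M; rewrite inM => /andP[_ /eqP].
have hpM w : polar A p (w *m M) = 0 by rewrite polarC.
have hp'M w : polar A p' (w *m M) = 0 by rewrite polarC.
pose A' := M *m A *m M^T.
have qA' w : qform A' w = qform A (w *m M).
  by rewrite /qform /A' trmx_mul !mulmxA.
have pA' w v : polar A' w v = polar A (w *m M) (v *m M).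
  by rewrite /polar !qA' mulmxDl.
clearbody A'.
pose proj z := z - polar A z p' *: p - polar A z p *: p'.
have proj_in z : (proj z <= M)%MS.
  rewrite inM /proj !polarDl !polarNl !polarZl hpp hp'p hpp' hp'p'.
  by apply/andP; split; apply/eqP; ring.
pose phi (t : (F * F) * 'rV[F]_m') := t.1.1 *: p + t.1.2 *: p' + t.2 *m M.
pose psi z : (F * F) * 'rV[F]_m' := ((polar A z p', polar A z p), proj z *m pinvmx M).
have psiK : cancel psi phi.
  move=> z; rewrite /phi /psi /= mulmxKpV ?proj_in // /proj.
  exact: zid2.
have phiK : cancel phi psi.
  case=> [[a b] w].
  have e1 : polar A (phi (a, b, w)) p' = a.
    by rewrite /phi !polarDl !polarZl hpp' hp'p' hMp' mulr1 mulr0 !addr0.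
  have e2 : polar A (phi (a, b, w)) p = b.
    by rewrite /phi !polarDl !polarZl hpp hp'p hMp mulr1 mulr0 add0r addr0.
  rewrite /psi e1 e2; congr (_, _).
  apply: (row_free_inj Mfree); rewrite /= mulmxKpV ?proj_in //.
  by rewrite /proj e1 e2 /phi /= zid3.
have Qphi t : qform A (phi t) = t.1.1 * t.1.2 + qform A' t.2.
  rewrite /phi qformD qformD !qformZ Qp Qp' qA' !polarDl !polarZl !polarZr hpM hp'M hpp'.
  ring.
have bij : bijective phi by exists psi.
have cardeq := bij_eq_card bij.
rewrite card_prod card_prod !card_mx !mul1n in cardeq.
have mm : m = m'.+2.
  by apply/eqP; rewrite -(eqn_exp2l _ _ (q_gt1 F)) -cardeq !expnS mulnA.
exists m', A'; split => //.
- move=> w w0 Qw.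
  have x0 : w *m M != 0.
    apply: contra w0 => /eqP h; apply/eqP; apply: (row_free_inj Mfree).
    by rewrite h mul0mx.
  have [z hz] := ndA x0 (etrans (esym (qA' w)) Qw).
  exists (proj z *m pinvmx M).
  rewrite pA' mulmxKpV ?proj_in //.
  move: hz; rewrite /proj !polarDr !polarNr !polarZr hMp hMp'.
  by rewrite !mulr0 !subr0.
- rewrite /Zc.
  have -> : [set x : 'rV[F]_m | qform A x == 0] =
            phi @: [set t | qform A (phi t) == 0].
    apply/setP => x; rewrite inE; apply/idP/imsetP => [h|[t]].
      by exists (psi x); rewrite ?inE psiK.
    by rewrite inE => h ->.
  rewrite card_imset; last exact: can_inj phiK.
  under eq_finset => t do rewrite Qphi.
  by rewrite count_hyp card_mx mul1n.
- move=> U' hU'.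
  have pU : ~~ (p <= U' *m M)%MS.
    apply/negP => h.
    have := submx_trans h (submxMl U' M); rewrite inM hpp' oner_eq0 andbF.
    by [].
  exists (<<(p + U' *m M)%MS>>%MS); split; last first.
    by rewrite genmxE rank_addv // mxrankMfree.
  move=> x; rewrite genmxE => /sub_addv [c [s [-> hs]]].
  have hs' : (s *m pinvmx (U' *m M) *m U' *m M = s).
    by rewrite -(mulmxA (s *m pinvmx (U' *m M))); exact: mulmxKpV hs.
  rewrite qformD qformZ Qp mulr0 add0r -hs' -qA' hU' ?submxMl // add0r.
  by rewrite polarZl hpM mulr0.
- move=> U hU pU.
  set X := (U :&: M)%MS.
  have XM : (X <= M)%MS by apply: capmxSr.
  exists (<<X *m pinvmx M>>%MS); split.
    move=> v; rewrite genmxE => /submxP [u ->].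
    rewrite qA' -mulmxA mulmxKpV //.
    by apply: hU; apply: submx_trans (submxMl _ _) (capmxSl _ _).
  rewrite genmxE.
  have r1 : (\rank X <= \rank (X *m pinvmx M))%N.
    by rewrite -{1}(mulmxKpV XM) mxrankM_maxl.
  have r2 : (U <= p + X)%MS.
    apply/row_subP => i.
    set u := row i U.
    have uU : (u <= U)%MS by apply: row_sub.
    set s := u - polar A u p' *: p.
    have -> : u = polar A u p' *: p + s by rewrite /s addrC subrK.
    apply: addv_sub; rewrite sub_capmx; apply/andP; split.
      by rewrite /s addmx_sub ?eqmx_opp ?scalemx_sub.
    rewrite inM /s polarDl polarNl polarZl hpp mulr0 subr0 polarDl polarNl polarZl hpp' mulr1 subrr eqxx andbT.
    by rewrite (tot_sing_sub hU uU pU).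
  have r3 := mxrankS r2.
  have := mxrank_adds_leqif p X; case=> h2 _.
  have h3 := rank_leq_row p.
  lia.
Qed.
End Split.

Lemma count_sing (F : finFieldType) k : forall m (A : 'M[F]_m) e,
  m = (2 * k + e)%N -> nondeg_qform A ->
  (exists U : 'M[F]_m, tot_singular A U /\ (k <= \rank U)%N) ->
  (forall U : 'M[F]_m, tot_singular A U -> (\rank U <= k)%N) ->
  (#|F| * Zc A + #|F| ^ (k + e) = #|F| ^ k * #|F| ^ (k + e) + #|F| ^ k * #|F|)%N.
Proof.
elim: k => [|k IH] m A e hm nd [U [hU rU]] hall.
  have -> : Zc A = 1%N.
    rewrite /Zc (_ : [set x | _] = [set 0]) ?cards1 //; apply/setP => x.
    rewrite !inE; apply/idP/idP => [hx|/eqP ->]; last by rewrite qform0.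
    apply/negPn/negP => x0.
    have : tot_singular A <<x>>%MS.
      move=> y; rewrite genmxE => /sub_rVP [a ->].
      by rewrite qformZ (eqP hx) mulr0.
    move/hall; rewrite mxrank_gen rank_rV x0.
    by [].
  by rewrite !expn0 !mul1n muln1 addnC.
have Un0 : U != 0 by rewrite -mxrank_eq0; move: rU; case: (\rank U).
have [i hi] : exists i, row i U != 0.
  case: (pickP (fun i => row i U != 0)) => [i hi | h]; first by exists i.
  case/negP: Un0; apply/eqP/row_matrixP => i; rewrite row0.
  by apply/eqP; move: (h i) => /negbFE.
have Qp : qform A (row i U) = 0 by apply: hU; apply: row_sub.
have [m' [A' [mm nd' Zeq up down]]] := hyp_split hi Qp nd.
have hm' : m' = (2 * k + e)%N by lia.
have [U' [hU' rU']] := down U hU (row_sub i U).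
have ex' : exists U0 : 'M[F]_m', tot_singular A' U0 /\ (k <= \rank U0)%N.
  by exists U'; split => //; lia.
have all' : forall V : 'M[F]_m', tot_singular A' V -> (\rank V <= k)%N.
  by move=> V hV; have [W [hW rW]] := up V hV; have := hall W hW; lia.
have IHe := IH m' A' e hm' nd' ex' all'.
have em : (#|F| ^ m' = #|F| ^ k * #|F| ^ (k + e))%N.
  by rewrite hm' -expnD; congr expn; lia.
rewrite Zeq em addSn !expnS.
move: IHe; clear.
set q := #|F|.
set a := (q ^ k)%N.
set c := (q ^ (k + e))%N.
have q1 : (1 <= q)%N by apply: ltnW; apply: q_gt1.
move=> IHe.
nia.
Qed.

Lemma arith r e : (e <= 2)%N -> odd r = (e != 1%N) ->
  [/\ (r + 3 = 2 * ((r + 3 - e) %/ 2) + e)%N, (1 <= (r + 3 - e) %/ 2)%N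
    & ((r + e + 1) %/ 2 = ((r + 3 - e) %/ 2).-1 + e)%N].
Proof.
move=> he hr.
have := odd_double_half r; rewrite hr -muln2.
case: e he hr => [|[|[|e]]] //= _ _ h; split; lia.
Qed.

Lemma sum_le_eq (T : finType) (P : pred T) (c : T -> nat) b :
  (forall t, P t -> (c t <= b)%N) ->
  (#|[set t | P t]| * b <= \sum_(t | P t) c t)%N ->
  forall t, P t -> c t = b.
Proof.
move=> hle hsum t Pt.
have e1 : (\sum_(t | P t) (b - c t) + \sum_(t | P t) c t = #|[set t | P t]| * b)%N.
  rewrite -big_split /= -sum1dep_card big_distrl /=.
  by apply: eq_bigr => u Pu; rewrite mul1n subnK // hle.
have : (\sum_(t | P t) (b - c t) == 0)%N by apply/eqP; lia.
rewrite sum_nat_eq0 => /forallP /(_ t); rewrite Pt /= => h.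
by apply/eqP; rewrite eqn_leq hle //= -subn_eq0.
Qed.

Lemma card_sub_sum (T : finType) (P Q : pred T) :
  #|[set t | P t && Q t]| = (\sum_(t | P t) (Q t : nat))%N.
Proof.
rewrite -sum_card [RHS]big_mkcond /=; apply: eq_bigr => t _.
by case: (P t).
Qed.

Section Main.
Variable F : finFieldType.
Variables e r : nat.
Variable A : 'M[F]_(r + 3).
Variable Sigma : 'I_((spreadN F r e).+1) -> 'M[F]_(r + 3).
Variable p : 'rV[F]_(r + 3).
Variable H : 'M[F]_(r + 3).
Hypothesis he : (e <= 2)%N.
Hypothesis hr : odd r = (e != 1%N).
Hypothesis hq : quadric_of_type A e.
Hypothesis hs : is_spread A e Sigma.
Hypothesis p0 : p != 0.
Hypothesis pS : (p <= Sigma ord_max)%MS.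
Hypothesis rH : \rank H = r.+1.
Hypothesis hH : forall x : 'rV[F]_(r + 3), (x <= H)%MS -> polar A p x = 0.
Hypothesis pH : ~~ (p <= H)%MS.

Local Notation N := (spreadN F r e).
Local Notation q := #|F|.
Local Notation g := ((r + 3 - e) %/ 2)%N.
Local Notation mx := (@ord_max N).

Lemma hS i : tot_singular A (Sigma i) /\ \rank (Sigma i) = g.
Proof. by case: hs => h _; have [] := h i. Qed.

Lemma disj i j (x : 'rV[F]_(r + 3)) : i != j -> (x <= Sigma i)%MS -> (x <= Sigma j)%MS -> x = 0.
Proof. move=> ij xi xj; case: hs => _ h; exact: (disj0 (h _ _ ij) xi xj). Qed.

Lemma pSi i : i != mx -> ~~ (p <= Sigma i)%MS.
Proof. by move=> im; apply/negP => h; case/eqP: p0; apply: (disj im h pS). Qed.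

Lemma Qp : qform A p = 0.
Proof. by have [h _] := hS mx; apply: h. Qed.

Lemma cover x : x != 0 -> qform A x = 0 -> exists i, (x <= Sigma i)%MS.
Proof.
move=> x0 Qx.
have [ha1 ha2 ha3] := arith he hr.
case: hq => nd [U0 [hU0 rU0]] hall.
have cnt := @count_sing F g (r + 3) A e ha1 nd (ex_intro _ U0 (conj hU0 (eq_leq (esym rU0)))) hall.
set Sp := fun y : 'rV[F]_(r + 3) => (y != 0) && (qform A y == 0).
have eZ : Zc A = (1 + #|[set y | Sp y]|)%N.
  rewrite /Zc (cardsD1 0) inE qform0 eqxx.
  have -> : [set y : 'rV[F]_(r + 3) | qform A y == 0] :\ 0 = [set y | Sp y].
    by apply/setP => y; rewrite !inE /Sp.
  by [].
have eN : (q ^ (g + e) = q * N)%N.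
  by rewrite /spreadN ha3 -expnS; congr expn; lia.
have qpos : (0 < q)%N by apply: ltnW; apply: q_gt1.
have hSset : #|[set y | Sp y]| = ((N + 1) * (q ^ g - 1))%N.
  rewrite eZ eN in cnt.
  have : (1 + #|[set y | Sp y]| + N = q ^ g * N + q ^ g)%N.
    apply/eqP; rewrite -(eqn_pmul2l qpos); apply/eqP; move: cnt.
    rewrite !mulnDr !mulnA (mulnC q (q ^ g)%N) -!mulnA.
    lia.
  have : (1 <= q ^ g)%N by rewrite expn_gt0 qpos.
  move: #|[set y | Sp y]| (q ^ g)%N => S a.
  nia.
set c := fun y : 'rV[F]_(r + 3) => #|[set i | (y <= Sigma i)%MS]|.
have cle y : Sp y -> (c y <= 1)%N.
  move=> /andP [y0 _]; apply/card_le1_eqP => i j; rewrite !inE => hi hj.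
  by apply/eqP; apply: contraT => ij; case/negP: y0; rewrite (disj ij hj hi).
have csum : (\sum_(y | Sp y) c y = #|[set y | Sp y]| * 1)%N.
  rewrite muln1 hSset.
  under eq_bigr => y _ do rewrite /c -sum_card.
  rewrite exchange_big /=.
  under eq_bigr => i _ do rewrite -card_sub_sum.
  have -> : (\sum_i #|[set y | Sp y && (y <= Sigma i)%MS]| = \sum_(i < N.+1) (q ^ g - 1))%N.
    apply: eq_bigr => i _.
    have [hti rki] := hS i.
    rewrite -rki -card_sub0; apply: eq_card => y; rewrite !inE /Sp.
    case: (y <= Sigma i)%MS /idP => hy; last by rewrite !andbF.
    by rewrite hti ?eqxx ?andbT.

  by rewrite big_const_ord iter_addn_0 mulnC addn1.
have cx : c x = 1%N.
  by apply: (sum_le_eq cle (eq_leq (esym csum))); rewrite /Sp x0 Qx eqxx.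
have : (0 < c x)%N by rewrite cx.
by case/card_gt0P => i; rewrite inE => hi; exists i.
Qed.

Lemma part3 x : x != 0 -> (x <= H)%MS -> qform A x = 0 -> ~~ (x <= Sigma mx)%MS ->
  #|[set i | (i != mx) && (x <= (p + Sigma i) :&: H)%MS]| = q.
Proof.
move=> x0 xH Qx xS.
have Qv l : qform A (l *: p + x) = 0.
  by rewrite qformD qformZ Qp mulr0 add0r Qx add0r polarZl hH // mulr0.
have xdec l : x = (- l) *: p + (l *: p + x) by rewrite scaleNr addKr.
have v0 l : l *: p + x != 0.
  apply/negP => /eqP h; case/negP: xS.
  rewrite (xdec l) h addr0; exact: scalemx_sub.
pose f l := odflt mx [pick i | ((l *: p + x)%R <= Sigma i)%MS].
have hf l : ((l *: p + x)%R <= Sigma (f l))%MS.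
  rewrite /f; case: pickP => [i hi // | h].
  have [i hi] := cover (v0 l) (Qv l).
  by have := h i; rewrite /= hi.
have fmx l : f l != mx.
  apply/negP => /eqP h; move: (hf l); rewrite h => hv.
  case/negP: xS; rewrite (xdec l); apply: addmx_sub => //.
  exact: scalemx_sub.
have finj : injective f.
  move=> l1 l2 h; apply/eqP; apply: contraT => ne.
  have d : (((l1 - l2) *: p)%R <= Sigma (f l1))%MS.
    have -> : (l1 - l2) *: p = (l1 *: p + x) - (l2 *: p + x).
      by rewrite scalerBl opprD addrACA subrr addr0.
    apply: addmx_sub; first exact: hf.
    by rewrite -scaleN1r; apply: scalemx_sub; rewrite h; apply: hf.
  have l12 : l1 - l2 != 0 by rewrite subr_eq0.
  case/negP: (pSi (fmx l1)).
  by rewrite -(scalerK l12 p); apply: scalemx_sub.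
have -> : [set i | (i != mx) && (x <= (p + Sigma i) :&: H)%MS] = f @: setT.
  apply/setP => i; rewrite inE; apply/andP/imsetP.
    case=> im hx; rewrite sub_capmx in hx; case/andP: hx => hxp _.
    have [c [s [hxs hs0]]] := sub_addv hxp.
    exists (- c) => //.
    apply/eqP; apply: contraT => ne.
    have vs : (- c) *: p + x = s by rewrite hxs scaleNr addKr.
    case/negP: (v0 (- c)); apply/eqP; apply: (disj ne); first by rewrite vs.
    exact: hf.
  case=> l _ ->; split; first exact: fmx.
  rewrite sub_capmx xH andbT (xdec l); apply: addv_sub; exact: hf.
by rewrite card_imset // cardsT.
Qed.

Lemma part1 i j : i != j ->
  (\rank (((p + Sigma i) :&: H) :&: ((p + Sigma j) :&: H))%MS <= 1)%N.
Proof. by move=> ij; apply: rank_cap_le1 => //; case: hs => _ h; apply: h. Qed.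


Lemma sum_const_cond (T : finType) (P : pred T) b :
  (\sum_(t | P t) b = #|[set t | P t]| * b)%N.
Proof. by rewrite -sum1dep_card big_distrl; apply: eq_bigr => t _; exact: (esym (mul1n b)). Qed.

Lemma part2 : e = 0%N -> forall i j, i != mx -> j != mx -> i != j ->
  \rank (((p + Sigma i) :&: H) :&: ((p + Sigma j) :&: H))%MS = 1%N.
Proof.
move=> e0 i j im jm ij.
have [ha1 ha2 ha3] := arith he hr.
pose Pi k := ((p + Sigma k) :&: H)%MS.
have rpi : (g.-1 <= \rank (Pi i))%N.
  have := mxrank_sum_cap (p + Sigma i)%MS H.
  rewrite rank_addv ?pSi // rH.
  have [_ ->] := hS i.
  have := rank_leq_col ((p + Sigma i) + H)%MS.
  rewrite /Pi; lia.
have hN : N = (q ^ g.-1)%N by rewrite /spreadN ha3 e0 addn0.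
have qgt1 := q_gt1 F.
have qpos : (0 < q)%N by apply: ltnW.
pose Xp (x : 'rV[F]_(r + 3)) := (x != 0) && (x <= Pi i)%MS.
pose Jp k := (k != mx) && (k != i).
have Xgood (x : 'rV[F]_(r + 3)) : Xp x -> #|[set k | (k != mx) && (x <= Pi k)%MS]| = q.
  case/andP => x0 xP.
  have xH : (x <= H)%MS by apply: submx_trans xP (capmxSr _ _).
  have xps : (x <= p + Sigma i)%MS by apply: submx_trans xP (capmxSl _ _).
  have [c [s [xe sS]]] := sub_addv xps.
  have hpp : polar A p p = 0 by rewrite polarxx Qp mulr0.
  have pxs : polar A p x = polar A p s by rewrite xe polarDr polarZr hpp mulr0 add0r.
  apply: part3 => //.
    rewrite xe qformD qformZ Qp mulr0 add0r polarZl -pxs hH // mulr0 addr0.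
    by have [h _] := hS i; apply: h.
  apply/negP => xm.
  have s0 : s = 0.
    apply: (disj im sS).
    have -> : s = x - c *: p by rewrite xe (addrC (c *: p) s) addrK.
    by apply: addmx_sub => //; rewrite -scaleN1r; apply: scalemx_sub; apply: scalemx_sub.
  rewrite s0 addr0 in xe.
  have c0 : c != 0 by apply: contra x0 => /eqP c0; rewrite xe c0 scale0r.
  case/negP: pH; rewrite -(scalerK c0 p) -xe; exact: scalemx_sub.
have inner (x : 'rV[F]_(r + 3)) : Xp x -> #|[set k | Jp k && (x <= Pi k)%MS]| = (q - 1)%N.
  move=> hx.
  have e1 : [set k | Jp k && (x <= Pi k)%MS] = [set k | (k != mx) && (x <= Pi k)%MS] :\ i.
    apply/setP => k; rewrite !inE /Jp.
    by case: (k == i); case: (k == mx).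
  rewrite e1.
  have := cardsD1 i [set k | (k != mx) && (x <= Pi k)%MS].
  rewrite Xgood // inE im /=; case/andP: hx => _ -> h.
  lia.
pose t k := #|[set x : 'rV[F]_(r + 3) | Xp x && (x <= Pi k)%MS]|.
have tE k : t k = (q ^ \rank (Pi i :&: Pi k)%MS - 1)%N.
  rewrite -card_sub0; apply: eq_card => x; rewrite !inE /Xp sub_capmx.
  by rewrite andbA.
have tle k : Jp k -> (t k <= q - 1)%N.
  case/andP => _ ki; rewrite tE; apply: leq_sub2r.
  have := part1 (i := i) (j := k); rewrite eq_sym ki => /(_ isT) r1.
  by rewrite -{2}(expn1 q); apply: leq_pexp2l.
have sumE : (\sum_(k | Jp k) t k = #|[set x | Xp x]| * (q - 1))%N.
  rewrite -sum_const_cond.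
  rewrite [RHS](eq_bigr (fun x => \sum_(k | Jp k) ((x <= Pi k)%MS : nat))%N); last first.
    by move=> x hx; rewrite -card_sub_sum inner.
  rewrite exchange_big /=; apply: eq_bigr => k _.
  by rewrite /t card_sub_sum.
have cardJ : #|[set k | Jp k]| = N.-1.
  have c1 : #|[set k : 'I_N.+1 | k != mx]| = N.
    by rewrite cardsE cardC1 card_ord.
  have := cardsD1 i [set k : 'I_N.+1 | k != mx]; rewrite c1 inE im.
  have -> : [set k : 'I_N.+1 | k != mx] :\ i = [set k | Jp k].
    by apply/setP => k; rewrite !inE /Jp andbC.
  move=> /= h; lia.
have cardX : (N.-1 <= #|[set x | Xp x]|)%N.
  rewrite (_ : [set x | Xp x] = [set x | (x != 0) && (x <= Pi i)%MS]) //.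
  rewrite card_sub0 hN -subn1 leq_sub2r // leq_pexp2l //.
have := sum_le_eq tle.
rewrite cardJ sumE => /(_ (leq_mul cardX (leqnn _)) j).
rewrite /Jp jm eq_sym ij tE => /(_ isT) h.
have r1 := part1 ij.
move: h r1; rewrite /Pi.
case: (\rank _) => [|[|k]] //.
  rewrite expn0 subnn => h _; lia.
Qed.

End Main.

Theorem mainTheorem3 (F : finFieldType) (e r : nat)
  (A : 'M[F]_(r + 3))
  (Sigma : 'I_((spreadN F r e).+1) -> 'M[F]_(r + 3))
  (p : 'rV[F]_(r + 3)) (H : 'M[F]_(r + 3)) :
  (e <= 2)%N ->
  odd r = (e != 1%N) ->
  quadric_of_type A e ->
  (* {Sigma_1, ..., Sigma_{N+1}} is a spread; Sigma_{N+1} = Sigma ord_max *)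
  is_spread A e Sigma ->
  (* P is a point of Sigma_{N+1} *)
  p != 0 -> (p <= Sigma ord_max)%MS ->
  (* H is an r-space contained in P^perp, not containing P *)
  \rank H = r.+1 ->
  (forall x : 'rV[F]_(r + 3), (x <= H)%MS -> polar A p x = 0) ->
  ~~ (p <= H)%MS ->
  let Pi := fun i => ((p + Sigma i) :&: H)%MS in
  [/\ (* (i) *)
      (e = 1%N \/ e = 2%N) ->
        forall i j : 'I_((spreadN F r e).+1),
          i != ord_max -> j != ord_max -> i != j ->
          (\rank (Pi i :&: Pi j)%MS <= 1)%N,
      (* (ii) *)
      e = 0%N -> (r %% 4 = 1)%N ->
        forall i j : 'I_((spreadN F r e).+1),
          i != ord_max -> j != ord_max -> i != j ->
          \rank (Pi i :&: Pi j)%MS = 1%N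
    & (* (iii) *)
      forall x : 'rV[F]_(r + 3),
        x != 0 -> (x <= H)%MS -> qform A x = 0 -> ~~ (x <= Sigma ord_max)%MS ->
        #|[set i : 'I_((spreadN F r e).+1) | (i != ord_max) && (x <= Pi i)%MS]| = #|F|].
Proof.
move=> he hr hq hs p0 pS rH hH pH Pi.
split.
- move=> _ i j _ _ ij; rewrite /Pi.
  exact: (part1 hs pH ij).
- move=> e0 _ i j im jm ij; rewrite /Pi.
  exact: (part2 he hr hq hs p0 pS rH hH pH e0 im jm ij).
- move=> x x0 xH Qx xS; rewrite /Pi.
  exact: (part3 he hr hq hs p0 pS rH hH pH x0 xH Qx xS).
Qed.
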